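(* Consider an $N$-player quadratic game with costs $f_1,\ldots,f_N$, step sizes $\gamma_1,\ldots,\gamma_N>0$, and the associated matrix $W\in\mathbb{R}^{n\times n}$ and disturbed gradient-based learning dynamics described in the context, in which player $i$'s gradient is corrupted by an arbitrary disturbance. For $\ell\in[N]$ let $\mathcal{S}(\ell)=\{x=(x_1,\ldots,x_N)\in\mathbb{R}^n : x_m=0 \text{ for all } m\neq \ell\}$, and for a subspace $\mathcal{M}\subseteq\mathbb{R}^n$ let $\mathcal{M}^\perp=\{x\in\mathbb{R}^n : x^\top\tilde x=0\ \forall \tilde x\in\mathcal{M}\}$. For a player $j\neq i$, the following statements are equivalent: (i) Player $j$ is disturbance decoupled from player $i$. (ii) $W^k v\in\mathcal{S}(j)^\perp$ for all $v\in\mathcal{S}(i)$ and all integers $0\le k<n$. (iii) $\mathrm{im}(W^kE)\subseteq\mathrm{im}(Y)$ for all integers $0\le k<n$, where $E\in\mathbb{R}^{n\times n_i}$ and $Y\in\mathbb{R}^{n\times(n-n_j)}$ are any matrices with $\mathrm{im}(E)=\mathcal{S}(i)$ and $\mathrm{im}(Y)=\mathcal{S}(j)^\perp$.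
   Context: There are $N$ players, indexed by $[N]=\{1,\ldots,N\}$; player $\ell$ has action $x_\ell\in\mathbb{R}^{n_\ell}$, $n=\sum_{\ell=1}^N n_\ell$, and $x=(x_1,\ldots,x_N)\in\mathbb{R}^n$ is the joint action. A quadratic game has costs $f_\ell(x)=\tfrac12 x_\ell^\top P_\ell x_\ell + x_\ell^\top\big(\sum_{m\neq \ell}P_{\ell m}x_m + r_\ell\big)$ with $P_\ell\in\mathbb{R}^{n_\ell\times n_\ell}$ symmetric, $P_{\ell m}\in\mathbb{R}^{n_\ell\times n_m}$, $r_\ell\in\mathbb{R}^{n_\ell}$. Each player $\ell$ has step size $\gamma_\ell>0$ and updates $x_\ell^{k+1}=x_\ell^k-\gamma_\ell\big(D_\ell f_\ell(x^k)+d_\ell^k\big)$, where $D_\ell f_\ell=\partial f_\ell/\partial x_\ell$ and $d_\ell^k\in\mathbb{R}^{n_\ell}$ is an arbitrary additive disturbance. Let $W\in\mathbb{R}^{n\times n}$ be the block matrix with blocks $W_{\ell\ell}=I_{n_\ell}-\gamma_\ell P_\ell$ and $W_{\ell m}=-\gamma_\ell P_{\ell m}$ ($\ell\neq m$), let $\Gamma=\mathrm{blkdiag}(\gamma_1 I_{n_1},\ldots,\gamma_N I_{n_N})$ and $\bar r=(r_1,\ldots,r_N)\in\mathbb{R}^n$. Let $\mathcal{D}_i=\{d=(d_1,\ldots,d_N)\in\mathbb{R}^n : d_m=0\ \forall m\neq i\}$ (disturbance only in player $i$'s gradient). The uncorrupted and corrupted dynamics are $x^{k+1}=Wx^k-\Gamma\bar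 r$ and $y^{k+1}=Wy^k-\Gamma\bar r-\Gamma d^k$. Player $j\neq i$ is said to be disturbance decoupled from player $i$ if for every initial joint action $x^0$, taking $y^0=x^0$, one has $y_j^k=x_j^k$ for all $k\ge 0$ and every disturbance sequence $(d^k)_{k\ge0}$ with $d^k\in\mathcal{D}_i$ for all $k$. *)

(* Defs.v *)
(* Linear-algebra statement over an ordered field R
   (the paper's R is an instance: any R : realFieldType). *)
From HB Require Import structures.
From mathcomp Require Import all_boot all_order all_algebra.
Set Implicit Arguments. Unset Strict Implicit. Unset Printing Implicit Defensive.
Import Order.TTheory GRing.Theory Num.Theory.
Local Open Scope ring_scope.

Section QuadGame.
Variables (R : realFieldType) (N : nat) (nl : 'I_N -> nat).

(* total dimension n = sum_l n_l; joint actions are column vectors 'cV_n,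
   split into player blocks with submxcol. *)
Definition dimn := (\sum_(l < N) nl l)%N.

(* Game data: Q l l = P_l, Q l m = P_{l m} (l <> m). *)
Definition Pfull (Q : forall l m : 'I_N, 'M[R]_(nl l, nl m)) : 'M[R]_dimn :=
  \mxblock_(l < N, m < N) Q l m.

Definition Gam (gamma : 'I_N -> R) : 'M[R]_dimn := \mxdiag_(l < N) (gamma l)%:M.

Definition Wmx (gamma : 'I_N -> R) (Q : forall l m : 'I_N, 'M[R]_(nl l, nl m))
  : 'M[R]_dimn := 1%:M - Gam gamma *m Pfull Q.

Definition rbar (r : forall l : 'I_N, 'cV[R]_(nl l)) : 'cV[R]_dimn :=
  \mxcol_(l < N) r l.

Fixpoint xtraj (W G : 'M[R]_dimn) (rb : 'cV[R]_dimn) (x0 : 'cV[R]_dimn) (k : nat)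
  : 'cV[R]_dimn :=
  match k with
  | 0 => x0
  | k'.+1 => W *m xtraj W G rb x0 k' - G *m rb
  end.

Fixpoint ytraj (W G : 'M[R]_dimn) (rb : 'cV[R]_dimn) (d : nat -> 'cV[R]_dimn)
  (y0 : 'cV[R]_dimn) (k : nat) : 'cV[R]_dimn :=
  match k with
  | 0 => y0
  | k'.+1 => W *m ytraj W G rb d y0 k' - G *m rb - G *m d k'
  end.

(* S(l) = { x | x_m = 0 for all m <> l }  (also D_l, the disturbance set) *)
Definition Sset (l : 'I_N) (x : 'cV[R]_dimn) : Prop :=
  forall m : 'I_N, m != l -> submxcol x m = 0.

Definition perp (M : 'cV[R]_dimn -> Prop) (x : 'cV[R]_dimn) : Prop :=
  forall xt, M xt -> x^T *m xt = 0.

Definition inIm p (A : 'M[R]_(dimn, p)) (x : 'cV[R]_dimn) : Prop :=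
  exists u : 'cV[R]_p, x = A *m u.

Definition dist_decoupled (gamma : 'I_N -> R)
  (Q : forall l m : 'I_N, 'M[R]_(nl l, nl m)) (r : forall l : 'I_N, 'cV[R]_(nl l))
  (i j : 'I_N) : Prop :=
  forall (x0 : 'cV[R]_dimn) (d : nat -> 'cV[R]_dimn),
    (forall k, Sset i (d k)) ->
    forall k, submxcol (ytraj (Wmx gamma Q) (Gam gamma) (rbar r) d x0 k) j
              = submxcol (xtraj (Wmx gamma Q) (Gam gamma) (rbar r) x0 k) j.

End QuadGame.

(* Main.v *)
Require Import Defs.
From HB Require Import structures.
From mathcomp Require Import all_boot all_order all_algebra.
Import Order.TTheory GRing.Theory Num.Theory.
Local Open Scope ring_scope.

Lemma CH_span (F : fieldType) n (A : 'M[F]_n) k :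
  exists c : nat -> F, A ^+ k = \sum_(t < n) c t *: A ^+ t.
Proof.
case: n A => [|n] A.
  by exists (fun _ => 0); apply/matrixP => -[].
pose p := 'X^k %% char_poly A.
exists (fun t => p`_t).
have hs : (size p <= n.+1)%N.
  have := ltn_modpN0 ('X^k) (q := char_poly A).
  rewrite size_char_poly; apply.
  by rewrite -size_poly_eq0 size_char_poly.
have -> : A ^+ k = horner_mx A p.
  rewrite {1}/p.
  have -> : A ^+ k = horner_mx A 'X^k by rewrite rmorphXn /= horner_mx_X.
  rewrite {1}(divp_eq 'X^k (char_poly A)) rmorphD rmorphM /= Cayley_Hamilton mulr0 add0r //.
have {1}-> : p = \poly_(i < n.+1) p`_i.
  apply/polyP => t; rewrite coef_poly; case: ltnP => // ht.
  by rewrite nth_default // (leq_trans hs ht).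
rewrite poly_def rmorph_sum /=; apply: eq_bigr => t _.
by rewrite horner_mxZ rmorphXn /= horner_mx_X.
Qed.

Lemma submxcolZ (R : realFieldType) (N : nat) (nl : 'I_N -> nat) m
  (a : R) (x : 'M[R]_(\sum_(l < N) nl l, m)) l :
  submxcol (a *: x) l = a *: submxcol x l.
Proof. by apply/matrixP => u w; rewrite !mxE. Qed.

Lemma GamS (R : realFieldType) (N : nat) (nl : 'I_N -> nat) (gamma : 'I_N -> R)
  i (v : 'cV[R]_(dimn nl)) : Sset i v -> Gam nl gamma *m v = gamma i *: v.
Proof.
move=> hv; rewrite /Gam -[v]submxcolK mul_mxdiag_mxcol.
apply/mxcolP => l; rewrite submxcolZ !mxcolK mul_scalar_mx.
case: (eqVneq l i) => [->|hl] //.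
by rewrite (hv l hl) !scaler0.
Qed.

Lemma trmul_blocks (R : realFieldType) (N : nat) (nl : 'I_N -> nat)
  (x xt : 'cV[R]_(dimn nl)) :
  x^T *m xt = \sum_l (submxcol x l)^T *m submxcol xt l.
Proof. by rewrite -{1}[x]submxcolK -{1}[xt]submxcolK tr_mxcol mul_mxrow_mxcol. Qed.

Lemma perpE (R : realFieldType) (N : nat) (nl : 'I_N -> nat) j
  (x : 'cV[R]_(dimn nl)) : perp (@Sset R N nl j) x <-> submxcol x j = 0.
Proof.
split; last first.
  move=> hx xt hxt; rewrite trmul_blocks (bigD1 j) //= hx trmx0 mul0mx add0r.
  by rewrite big1 // => l hl; rewrite (hxt l hl) mulmx0.
move=> hp.
pose xt : 'cV[R]_(dimn nl) := \mxcol_l (if l == j then submxcol x l else 0).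
have hxt : Sset j xt by move=> m hm; rewrite /xt mxcolK (negbTE hm).
have := hp xt hxt; rewrite trmul_blocks (bigD1 j) //= big1; last first.
  by move=> l hl; rewrite /xt mxcolK (negbTE hl) mulmx0.
rewrite addr0 /xt mxcolK eqxx => h0.
move/matrixP: h0 => /(_ ord0 ord0); rewrite !mxE => hs.
have hs' : \sum_k (submxcol x j k ord0) ^+ 2 = 0.
  by rewrite -[RHS]hs; apply: eq_bigr => k _; rewrite [(_^T) _ _]mxE expr2.
apply/matrixP => u w; rewrite (ord1 w) [RHS]mxE.
have := psumr_eq0P _ hs' (i := u).
move=> h; apply/eqP; rewrite -sqrf_eq0; apply/eqP; apply: h => //.
by move=> k _; apply: sqr_ge0.
Qed.


Theorem proposition1 (R : realFieldType) (N : nat) (nl : 'I_N -> nat)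
  (Q : forall l m : 'I_N, 'M[R]_(nl l, nl m))
  (r : forall l : 'I_N, 'cV[R]_(nl l))
  (gamma : 'I_N -> R)
  (hsym : forall l : 'I_N, (Q l l)^T = Q l l)
  (hgamma : forall l : 'I_N, 0 < gamma l)
  (i j : 'I_N) (hij : j != i)
  (E : 'M[R]_(dimn nl, nl i)) (Y : 'M[R]_(dimn nl, dimn nl - nl j))
  (hE : forall x, inIm E x <-> Sset i x)
  (hY : forall x, inIm Y x <-> perp (@Sset R N nl j) x) :
  let W := Wmx gamma Q in
  (dist_decoupled gamma Q r i j <->
     (forall v, Sset i v -> forall k : nat, (k < dimn nl)%N ->
        perp (@Sset R N nl j) (W ^+ k *m v)))
  /\
  (dist_decoupled gamma Q r i j <->
     (forall k : nat, (k < dimn nl)%N ->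
        forall x, inIm (W ^+ k *m E) x -> inIm Y x)).
Proof.
move=> W.
pose G := Gam nl gamma.
pose rb := rbar r.
have err : forall d x0 k,
  ytraj W G rb d x0 k.+1 - xtraj W G rb x0 k.+1
  = W *m (ytraj W G rb d x0 k - xtraj W G rb x0 k) - G *m d k.
  move=> d x0 k /=; rewrite mulmxBr opprB !addrA.
  by rewrite (addrAC _ (- (G *m d k))) subrK addrAC.
have gi0 : gamma i != 0 by rewrite gt_eqF.
have step1 : dist_decoupled gamma Q r i j <->
   (forall v, Sset i v -> forall k, submxcol (W ^+ k *m v) j = 0).
  split.
  - move=> hd v hv k.
    pose d := fun t : nat => if t == 0%N then (gamma i)^-1 *: v else 0.
    have hdS : forall t, Sset i (d t).
      move=> t m hm; rewrite /d; case: (t == 0%N).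
        by rewrite submxcolZ (hv m hm) scaler0.
      by rewrite submxcol0.
    have claim : forall t, ytraj W G rb d 0 t.+1 - xtraj W G rb 0 t.+1
                           = - (W ^+ t *m v).
      elim=> [|t IH].
        rewrite err /= subrr mulmx0 sub0r /d /= /G (@GamS _ _ _ _ i).
          by rewrite scalerA mulfV // scale1r expr0 mul1mx.
        by move=> m hm; rewrite submxcolZ (hv m hm) scaler0.
      by rewrite err IH /d /= mulmx0 subr0 mulmxN mulmxA exprS.
    have := hd 0 d hdS k.+1.
    move/eqP; rewrite -subr_eq0 -submxcolB => /eqP.
    by rewrite claim submxcolN => /eqP; rewrite oppr_eq0 => /eqP.
  - move=> hP x0 d hd k.
    have K : forall k t, submxcol (W ^+ t *m (ytraj W G rb d x0 k - xtraj W G rb x0 k)) j = 0.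
      elim=> [|k' IH] t.
        by rewrite /= subrr mulmx0 submxcol0.
      rewrite err mulmxBr submxcolB mulmxA (_ : W ^+ t *m W = W ^+ t.+1); last by rewrite exprSr.
      rewrite IH /G (@GamS _ _ _ _ i) //.
      by rewrite -scalemxAr submxcolZ hP // scaler0 subr0.
    have := K k 0%N; rewrite expr0 mul1mx submxcolB => /eqP.
    by rewrite subr_eq0 => /eqP.
have step2 : (forall v, Sset i v -> forall k, submxcol (W ^+ k *m v) j = 0) <->
   (forall v, Sset i v -> forall k : nat, (k < dimn nl)%N ->
        perp (@Sset R N nl j) (W ^+ k *m v)).
  split.
  - by move=> hP v hv k _; apply/perpE; apply: hP.
  - move=> h v hv k.
    have [c ->] := @CH_span _ _ W k.
    rewrite mulmx_suml submxcol_sum big1 // => t _.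
    by rewrite -scalemxAl submxcolZ (proj1 (perpE _ _ _ _ _) (h v hv t (ltn_ord t))) scaler0.
have step3 : (forall v, Sset i v -> forall k : nat, (k < dimn nl)%N ->
        perp (@Sset R N nl j) (W ^+ k *m v)) <->
     (forall k : nat, (k < dimn nl)%N ->
        forall x, inIm (W ^+ k *m E) x -> inIm Y x).
  split.
  - move=> h k hk x [u ->]; apply/hY; rewrite -mulmxA; apply: h => //.
    by apply/hE; exists u.
  - move=> h v hv k hk; have [u ->] := proj2 (hE v) hv.
    by apply/hY; apply: (h k hk); exists u; rewrite mulmxA.
split.
- exact: (iff_trans step1 step2).
- exact: (iff_trans step1 (iff_trans step2 step3)).
Qed.
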